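(* Let $k>1$ and $1\le\gamma<k$. Consider instances $\mathcal{I}_{m,\mathcal{A}_n,k}$ whose users are partitioned into $\gamma$ groups $G_1,\dots,G_\gamma$ each of which is cohesive. For any scoring rule $f$, the price of justified representation over such instances satisfies $P(k,f)\le\frac{k}{k-\gamma}$, and this holds with equality for certain scoring rules, such as maximin diverse approval $f_{DA}$.
   Context: An instance $\mathcal{I}_{m,\mathcal{A}_n,k}=\langle m,\mathcal{A}_n,k\rangle$ consists of items $[m]$, users $[n]$, an approval profile $\mathcal{A}_n=(A_1,\dots,A_n)$ with $A_u\subseteq[m]$, and a target size $k\le m$. A scoring rule assigns each item a score $f(i,\mathcal{A}_n)\ge0$, additive over sets: $f(S)=\sum_{i\in S}f(i,\mathcal{A}_n)$. A group $G\subseteq[n]$ is cohesive if $\bigcap_{u\in G}A_u\ne\emptyset$; $S$ represents $G$ if some $u\in G$ has $A_u\cap S\ne\emptyset$; $S$ satisfies justified representation (JR) if $|S|=k$ and $S$ represents every cohesive group of at least $n/k$ users. $S^*$ maximizes $f(S)$ over all $S\subseteq[m]$ with $|S|=k$; $S^*_{JR}$ maximizes $f(S)$ over sets satisfying JR. The price of JR on an instance is $P(\mathcal{I}_{m,\mathcal{A}_n,k},f)=f(S^* )/f(S^*_{JR})$, and $P(k,f)$ is its maximum over the instances considered. Maximin diverse approval with respect to groups $G_1,\dots,G_\gamma$ is $f_{DA}(i,\mathcal{A}_n)=\min_{g\in[\gamma]}\frac{1}{|G_g|}|\{u\in G_g:i\in A_u\}|$. *)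

(* Defs.v *)
From mathcomp Require Import all_boot all_order all_algebra.
Set Implicit Arguments. Unset Strict Implicit. Unset Printing Implicit Defensive.
Import Order.TTheory GRing.Theory Num.Theory.
Local Open Scope ring_scope.

(* Items are 'I_m, users are 'I_n; an approval profile assigns to each user
   the set A_u of approved items. *)
Definition profile (m n : nat) := 'I_n -> {set 'I_m}.

Definition cohesive m n (A : profile m n) (G : {set 'I_n}) : bool :=
  [exists i : 'I_m, [forall u in G, i \in A u]].

Definition represents m n (A : profile m n) (S : {set 'I_m}) (G : {set 'I_n}) : bool :=
  [exists u in G, A u :&: S != set0].

(* Justified representation: |S| = k and every cohesive group with
   |G| >= n/k (i.e. |G| * k >= n) is represented. *)
Definition JR m n (A : profile m n) (k : nat) (S : {set 'I_m}) : bool :=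
  (#|S| == k) &&
  [forall G : {set 'I_n}, (cohesive A G && (n <= #|G| * k)%N) ==> represents A S G].

Definition setscore (R : realFieldType) m (s : 'I_m -> R) (S : {set 'I_m}) : R :=
  \sum_(i in S) s i.

(* f(S^* ): maximum score over sets of size k (scores are >= 0, so 0 is a
   harmless initial value of the max). *)
Definition opt (R : realFieldType) m (s : 'I_m -> R) (k : nat) : R :=
  \big[Num.max/0]_(S : {set 'I_m} | #|S| == k) setscore s S.

Definition optJR (R : realFieldType) m n (A : profile m n) (s : 'I_m -> R) (k : nat) : R :=
  \big[Num.max/0]_(S : {set 'I_m} | JR A k S) setscore s S.

Definition price (R : realFieldType) m n (A : profile m n) (s : 'I_m -> R) (k : nat) : R :=
  opt s k / optJR A s k.

Definition group_of n gamma (g : 'I_n -> 'I_gamma) (j : 'I_gamma) : {set 'I_n} :=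
  [set u | g u == j].

Definition partitioned_cohesive m n gamma (A : profile m n) (g : 'I_n -> 'I_gamma) : bool :=
  [forall j : 'I_gamma, (group_of g j != set0) && cohesive A (group_of g j)].

(* Maximin diverse approval w.r.t. the groups G_1..G_gamma
   (all fractions are <= 1, so 1 is the neutral value of the min for gamma >= 1). *)
Definition fDA (R : realFieldType) m n gamma (g : 'I_n -> 'I_gamma) (A : profile m n)
  (i : 'I_m) : R :=
  \big[Num.min/1]_(j : 'I_gamma)
     (#|[set u in group_of g j | i \in A u]|%:R / #|group_of g j|%:R).

Definition scoring_rule (R : realFieldType) := forall m n : nat, 'I_m -> profile m n -> R.

Definition nonneg_rule (R : realFieldType) (f : scoring_rule R) : Prop :=
  forall m n (i : 'I_m) (A : profile m n), 0 <= f m n i A.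

(* Main.v *)
Require Import Defs.
From mathcomp Require Import all_boot all_order all_algebra.
From mathcomp Require Import zify ring lra.
Import Order.TTheory GRing.Theory Num.Theory.
Local Open Scope ring_scope.



Lemma score_sub (R : realFieldType) m (s : 'I_m -> R) (A B : {set 'I_m}) :
  (forall i, 0 <= s i) -> A \subset B -> setscore s A <= setscore s B.
Proof.
move=> s0 AB; rewrite /setscore [X in _ <= X](big_setID A) /= (setIidPr AB) lerDl.
by apply: sumr_ge0 => i _.
Qed.

Lemma score_ge0 (R : realFieldType) m (s : 'I_m -> R) (A : {set 'I_m}) :
  (forall i, 0 <= s i) -> 0 <= setscore s A.
Proof. by move=> s0; apply: sumr_ge0. Qed.

Lemma min_elt (R : realFieldType) m (s : 'I_m -> R) (S : {set 'I_m}) :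
  (0 < #|S|)%N -> exists2 x, x \in S & #|S|%:R * s x <= setscore s S.
Proof.
case/card_gt0P => x0 x0S.
case: (arg_minP s (P := mem S) x0S) => x xS hx.
exists x => //; rewrite /setscore mulr_natl -sumr_const.
by apply: ler_sum => i iS; apply: hx.
Qed.

Lemma shrink (R : realFieldType) m (s : 'I_m -> R) (s0 : forall i, 0 <= s i) r t :
  forall S : {set 'I_m}, #|S| = (r + t)%N ->
  exists S' : {set 'I_m}, [/\ S' \subset S, #|S'| = r &
     r%:R * setscore s S <= (r + t)%:R * setscore s S'].
Proof.
elim: t => [|t IH] S hS.
  by exists S; rewrite addn0 in hS *; split.
have [x xS hx] : exists2 x, x \in S & #|S|%:R * s x <= setscore s S.
  by apply: min_elt; rewrite hS addnS.
have hS1 : #|S :\ x| = (r + t)%N.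
  by move: hS; rewrite (cardsD1 x S) xS addnS add1n => -[].
have [S' [sub cS' le']] := IH _ hS1.
exists S'; split => //.
  by apply: (subset_trans sub); apply: subsetDl.
have eS : setscore s S = s x + setscore s (S :\ x) by rewrite /setscore (big_setD1 _ xS).
rewrite hS in hx.
move: le' hx; rewrite eS.
set a := setscore s (S :\ x); set b := setscore s S'; set c := s x.
have b0 : 0 <= b by apply: score_ge0.
have a0 : 0 <= a by apply: score_ge0.
have r0 : 0 <= (r%:R : R) by [].
rewrite !addnS -!natr1 !natrD.
set rr := (r%:R : R); set tt := (t%:R : R).
have t0 : 0 <= tt by [].
move=> h1 h2.
have [z|pos] := eqVneq (rr + tt) 0.
  have rz : rr = 0 by lra.
  by rewrite rz mul0r; apply: mulr_ge0 => //; lra.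
have p : 0 < rr + tt by lra.
have h3 : (rr + tt) * ((rr + tt + 1) * b) >= (rr + tt) * (rr * (c + a)).
  nra.
by rewrite ler_pM2l in h3.
Qed.

Lemma extend (T : finType) (X : {set T}) k :
  (#|X| <= k <= #|T|)%N -> exists Y : {set T}, X \subset Y /\ #|Y| = k.
Proof.
elim: k X => [|k IH] X /andP [hX hk].
  by exists X; split => //; apply/eqP; rewrite -leqn0.
have [e|ne] := eqVneq #|X| k.+1; first by exists X.
have [Y [XY cY]] : exists Y : {set T}, X \subset Y /\ #|Y| = k.
  by apply: IH; apply/andP; split; lia.
have : ~~ ([set: T] \subset Y).
  apply/negP => /subset_leq_card; rewrite cardsT cY; lia.
case/subsetPn => z _ zY.
exists (z |: Y); split; first by apply: (subset_trans XY); apply: subsetUr.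
by rewrite cardsU1 zY cY.
Qed.



Lemma bigmax0_ge0 (R : realFieldType) (I : finType) (P : pred I) (F : I -> R) :
  0 <= \big[Num.max/0]_(i | P i) F i.
Proof. by elim/big_rec: _ => // i x _ hx; rewrite le_max hx orbT. Qed.

Lemma part1 (R : realFieldType) (k gamma : nat)
  (hk : (1 < k)%N) (hg1 : (1 <= gamma)%N) (hgk : (gamma < k)%N)
  m n (A : profile m n) (g : 'I_n -> 'I_gamma) (s : 'I_m -> R) :
  (forall i, 0 <= s i) -> (k <= m)%N -> partitioned_cohesive A g ->
  opt s k <= (k%:R / (k - gamma)%:R) * optJR A s k.
Proof.
move=> s0 hkm hpc.
have n0 : (0 < n)%N.
  move/forallP: hpc => /(_ (Ordinal hg1)) /andP [/set0Pn [u _] _].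
  exact: (leq_ltn_trans (leq0n u) (ltn_ord u)).
have m0 : (0 < m)%N by lia.
pose i0 : 'I_m := Ordinal m0.
pose c := fun j => odflt i0 [pick i | [forall u in group_of g j, i \in A u]].
have hc : forall j u, u \in group_of g j -> c j \in A u.
  move=> j u uj; rewrite /c; case: pickP => [i /forallP hi | none] /=.
    by move/implyP: (hi u); apply.
  move/forallP: hpc => /(_ j) /andP [_ /existsP [i hi]].
  by rewrite none in hi.
have kg : (0 < k - gamma)%N by lia.
have kgR : 0 < ((k - gamma)%:R : R) by rewrite ltr0n.
rewrite /opt; apply: bigmax_le.
  by apply: mulr_ge0; [apply: divr_ge0 | apply: bigmax0_ge0].
move=> S /eqP cS.
have [S' [sub cS' le']] := @shrink R m s s0 (k - gamma)%N gamma S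
   (etrans cS (esym (subnK (ltnW hgk)))).
rewrite subnK in le'; last exact: ltnW.
pose C := [set c j | j : 'I_gamma].
have cX : (#|S' :|: C| <= k)%N.
  apply: (leq_trans (leq_card_setU _ _)); rewrite cS'.
  have : (#|C| <= gamma)%N.
    by apply: (leq_trans (leq_imset_card _ _)); rewrite card_ord.
  move=> hC; apply: (leq_trans (leq_add (leqnn _) hC)); rewrite subnK //; exact: ltnW.
have [Y [XY cY]] : exists Y : {set 'I_m}, S' :|: C \subset Y /\ #|Y| = k.
  by apply: extend; rewrite cX card_ord.
have JRY : JR A k Y.
  rewrite /JR cY eqxx /=; apply/forallP => G; apply/implyP => /andP [_ hG].
  case: (set_0Vmem G) => [G0 | [u uG]].
    by move: hG; rewrite G0 cards0 mul0n leqn0 => /eqP n00; rewrite n00 in n0.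
  apply/existsP; exists u; rewrite uG /=; apply/set0Pn; exists (c (g u)).
  rewrite inE hc ?inE //=.
  apply: (subsetP XY); rewrite inE; apply/orP; right; apply/imsetP; exists (g u) => //.
have h1 : setscore s S' <= setscore s Y.
  exact: score_sub s0 (subset_trans (subsetUl _ _) XY).
have h2 : setscore s Y <= optJR A s k by exact: le_bigmax_cond.
rewrite mulrAC ler_pdivlMr //.
apply: (le_trans _ (ler_wpM2l (ler0n _ k) (le_trans h1 h2))); by rewrite mulrC.
Qed.


Lemma tight_gen (R : realFieldType) (k gamma : nat) (hgk : (gamma < k)%N) n
  (A : profile (gamma + k) n) (s : 'I_(gamma + k) -> R) (v : R) :
  0 < v -> (forall i, s i = if (gamma <= i)%N then v else 0) -> (0 < n)%N ->
  (forall u, exists i : 'I_(gamma + k), (i < gamma)%N && (i \in A u)) ->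
  (forall S, JR A k S -> forall i : 'I_(gamma + k), (i < gamma)%N -> i \in S) ->
  0 < optJR A s k /\ price A s k = k%:R / (k - gamma)%:R.
Proof.
move=> v0 hs n0 hA hJR.
pose D := [set lshift k j | j : 'I_gamma].
have inD : forall i : 'I_(gamma + k), (i \in D) = (i < gamma)%N.
  move=> i; apply/imsetP/idP => [[j _ ->] | hi] /=; first exact: ltn_ord.
  by exists (Ordinal hi) => //; apply: val_inj.
have cD : #|D| = gamma by rewrite card_imset ?card_ord //; exact: lshift_inj.
have cGd : #|~: D| = k by move: (cardsC D); rewrite cD card_ord => /eqP; rewrite eqn_add2l => /eqP.
have sc : forall S, setscore s S = v *+ #|S :\: D|.
  move=> S; rewrite /setscore -sumr_const.
  rewrite (big_setID D) /= [X in X + _]big1 ?add0r; last first.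
    by move=> i; rewrite inE hs inD => /andP [_]; rewrite ltnNge => /negbTE ->.
  apply: eq_bigr => i; rewrite inE inD => /andP [hi _]; by rewrite hs leqNgt hi.
have s0 : forall i, 0 <= s i by move=> i; rewrite hs; case: ifP => _; [exact: ltW|].
have hopt : opt s k = v *+ k.
  apply/le_anti/andP; split.
    apply: bigmax_le; first by rewrite mulrn_wge0 // ltW.
    move=> S /eqP cS; rewrite sc ler_pMn2l // -[X in (_ <= X)%N]cS.
    by apply: subset_leq_card; apply: subsetDl.
  have -> : v *+ k = setscore s (~: D) by rewrite sc setDE setIid cGd.
  by apply: le_bigmax_cond; rewrite /= cGd.
have JRD : forall S : {set 'I_(gamma + k)}, D \subset S -> #|S| = k -> setscore s S = v *+ (k - gamma).
  by move=> S DS cS; rewrite sc cardsD (setIidPr DS) cS cD.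
have [Y [DY cY]] : exists Y : {set 'I_(gamma + k)}, D \subset Y /\ #|Y| = k.
  by apply: extend; rewrite cD card_ord ltnW //= leq_addl.
have JRY : JR A k Y.
  rewrite /JR cY eqxx /=; apply/forallP => G; apply/implyP => /andP [_ hG].
  case: (set_0Vmem G) => [G0 | [u uG]].
    by move: hG; rewrite G0 cards0 mul0n leqn0 => /eqP n00; rewrite n00 in n0.
  apply/existsP; exists u; rewrite uG /=; apply/set0Pn.
  have [i /andP [ig iA]] := hA u.
  exists i; rewrite inE iA /=; apply: (subsetP DY); by rewrite inD.
have hoptJR : optJR A s k = v *+ (k - gamma).
  apply/le_anti/andP; split.
    apply: bigmax_le; first by rewrite mulrn_wge0 // ltW.
    move=> S JS; rewrite JRD //.
      by apply/subsetP => i; rewrite inD; apply: hJR.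
    by move/andP: JS => [/eqP].
  rewrite -(JRD Y) //; exact: le_bigmax_cond.
have kg : (0 < k - gamma)%N by rewrite subn_gt0.
split; first by rewrite hoptJR pmulrn_lgt0.
rewrite /price hopt hoptJR -[v *+ k]mulr_natr -[v *+ (k - gamma)]mulr_natr.
have kgR : ((k - gamma)%:R : R) != 0 by rewrite pnatr_eq0 -lt0n.
have vn : v != 0 by rewrite gt_eqF.
by rewrite invfM mulrACA divff // mul1r.
Qed.


Theorem theorem2 (R : realFieldType) (k gamma : nat)
  (hk : (1 < k)%N) (hg1 : (1 <= gamma)%N) (hgk : (gamma < k)%N) :
  (forall f : scoring_rule R, nonneg_rule f ->
     forall (m n : nat) (A : profile m n) (g : 'I_n -> 'I_gamma),
       (k <= m)%N -> partitioned_cohesive A g ->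
       opt (fun i => f m n i A) k
         <= (k%:R / (k - gamma)%:R) * optJR A (fun i => f m n i A) k)
  /\
  (exists f : scoring_rule R, nonneg_rule f /\
     exists (m n : nat) (A : profile m n) (g : 'I_n -> 'I_gamma),
       [/\ (k <= m)%N, partitioned_cohesive A g,
           0 < optJR A (fun i => f m n i A) k &
           price A (fun i => f m n i A) k = k%:R / (k - gamma)%:R])
  /\
  ((1 < gamma)%N ->
     exists (m n : nat) (A : profile m n) (g : 'I_n -> 'I_gamma),
       [/\ (k <= m)%N, partitioned_cohesive A g,
           0 < optJR A (fDA R g A) k &
           price A (fDA R g A) k = k%:R / (k - gamma)%:R]).
Proof.
split.
  move=> f hf m n A g hkm hpc.
  by apply: (@part1 R k gamma hk hg1 hgk m n A g (fun i => f m n i A)).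
pose n := (gamma * gamma.+1)%N.
have hjn : forall j : 'I_gamma, (j < n)%N.
  move=> j; apply: (leq_trans (ltn_ord j)); rewrite /n; apply: leq_pmulr; done.
have n0 : (0 < n)%N by apply: (leq_ltn_trans (leq0n _) (hjn (Ordinal hg1))).
pose g := fun u : 'I_n => (Ordinal (ltn_pmod u hg1) : 'I_gamma).
pose A : profile (gamma + k) n := fun u =>
  [set i : 'I_(gamma + k) | (i == (u %% gamma)%N :> nat) || ((u < gamma)%N && (gamma <= i)%N)].
have hkm : (k <= gamma + k)%N by apply: leq_addl.
have hpc : partitioned_cohesive A g.
  apply/forallP => j; apply/andP; split.
    apply/set0Pn; exists (Ordinal (hjn j)); rewrite inE; apply/eqP/val_inj => /=.
    by rewrite modn_small.
  apply/existsP; exists (widen_ord (leq_addr k gamma) j); apply/forallP => u.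
  by apply/implyP; rewrite inE => /eqP <-; rewrite /A inE /= eqxx.
have hA : forall u, exists i : 'I_(gamma + k), (i < gamma)%N && (i \in A u).
  move=> u; exists (widen_ord (leq_addr k gamma) (g u)).
  by rewrite /= ltn_pmod // /A inE /= eqxx.
have hJR : forall S, JR A k S -> forall i : 'I_(gamma + k), (i < gamma)%N -> i \in S.
  move=> S /andP [_ /forallP hS] i hi.
  pose B := [set u : 'I_n | ((u %% gamma)%N == i) && (gamma <= u)%N].
  have hlt : forall t : 'I_gamma, (i + gamma * t.+1 < n)%N.
    move=> t; have := leq_mul (leqnn gamma) (ltn_ord t); rewrite /n => h; rewrite [X in (_ < X)%N]mulnS.
    move: h hi; generalize (gamma * t.+1)%N (gamma * gamma)%N.
    by move=> n1 n2 h1 h2; rewrite -addSn; apply: leq_add.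
  pose h := fun t : 'I_gamma => (Ordinal (hlt t) : 'I_n).
  have cB : (gamma <= #|B|)%N.
    have eh : #|[set h t | t : 'I_gamma]| = gamma.
      rewrite card_imset ?card_ord // => t1 t2 /(congr1 val) /= e.
      by apply: val_inj; move/eqP: e; rewrite eqn_add2l eqn_mul2l eqn0Ngt hg1 /= eqSS => /eqP.
    rewrite -[X in (X <= _)%N]eh.
    apply: subset_leq_card; apply/subsetP => u /imsetP [t _ ->].
    rewrite inE /=; apply/andP; split; last by rewrite mulnS addnCA leq_addr.
    by rewrite addnC mulnC modnMDl modn_small.
  have hB : cohesive A B && (n <= #|B| * k)%N.
    apply/andP; split.
      apply/existsP; exists i; apply/forallP => u; apply/implyP.
      by rewrite inE => /andP [/eqP e _]; rewrite /A inE e eqxx.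
    rewrite /n; apply: (leq_trans (leq_mul (leqnn gamma) hgk)).
    by rewrite leq_mul2r cB orbT.
  move/implyP: (hS B) => /(_ hB).
  case/existsP => u /andP [uB /set0Pn [x]]; rewrite !inE => /andP [xA xS].
  move: uB; rewrite inE => /andP [/eqP ui gu].
  move: xA; rewrite ?inE ltnNge gu /= orbF ui => /eqP e.
  by have -> : i = x by apply: val_inj.
split.
  exists (fun m n (i : 'I_m) (A : profile m n) => if (gamma <= i)%N then (1 : R) else 0).
  split; first by move=> m n' i A'; case: ifP.
  exists (gamma + k)%N, n, A, g.
  have [h1 h2] := @tight_gen R k gamma hgk n A
     (fun i => if (gamma <= i)%N then (1 : R) else 0) 1 ltr01 (fun i => erefl) n0 hA hJR.
  by split.
move=> hg2.
exists (gamma + k)%N, n, A, g.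
have k0 : (0 < k)%N by apply: ltnW.
pose i1 : 'I_(gamma + k) := rshift gamma (Ordinal k0).
have hAgood : forall (u : 'I_n) (i : 'I_(gamma + k)), (gamma <= i)%N ->
    ((i == (u %% gamma)%N :> nat) || ((u < gamma)%N && (gamma <= i)%N)) = (u < gamma)%N.
  move=> u i hi.
  have hlt : ((u %% gamma)%N < i)%N := leq_trans (ltn_pmod u hg1) hi.
  by rewrite gtn_eqF //= hi andbT.
have i1g : (gamma <= i1)%N by rewrite /= addn0.
pose v := fDA R g A i1.
have v0 : 0 < v.
  rewrite /v /fDA; elim/big_ind: _ => //.
    by move=> x y hx hy; rewrite lt_min hx hy.
  move=> j _; apply: divr_gt0; rewrite ltr0n; apply/card_gt0P; exists (Ordinal (hjn j)).
    rewrite !inE hAgood //=; apply/andP; split; last exact: ltn_ord.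
    by apply/eqP/val_inj; rewrite /= modn_small.
  by rewrite !inE; apply/eqP/val_inj; rewrite /= modn_small.
have hs : forall i, fDA R g A i = if (gamma <= i)%N then v else 0.
  move=> i; case: ifP => hi.
    rewrite /v /fDA; apply: eq_bigr => j _; congr (_%:R / _); apply: eq_card => u.
    by rewrite !inE hAgood // hAgood.
  have hi' : (i < gamma)%N by rewrite ltnNge hi.
  pose j' : 'I_gamma := if (val i == 0)%N then Ordinal hg2 else Ordinal hg1.
  have j'i : (val j' != val i).
    rewrite /j'; case: (val i =P 0%N) => [e | ne] /=; first by rewrite e.
    by rewrite eq_sym; apply/eqP.
  apply/le_anti/andP; split.
    rewrite /fDA (bigD1 j') //= ge_min; apply/orP; left.
    rewrite (_ : [set u in group_of g j' | i \in A u] = set0) ?cards0 ?mul0r //.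
    apply/setP => u; rewrite !inE; apply/negbTE/negP => /andP [/eqP gu].
    rewrite hi andbF orbF => /eqP e.
    by move: j'i; rewrite -gu /= e eqxx.
  apply: le_bigmin => // j _; apply: divr_ge0; exact: ler0n.
have [h1 h2] := @tight_gen R k gamma hgk n A (fDA R g A) v v0 hs n0 hA hJR.
by split.
Qed.
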